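(* Let $n\geq 2$ and let $\mathcal{G}=(\mathcal{V},\mathcal{E})$ be a directed graph on $\mathcal{V}=\{1,\ldots,n\}$ in which every node has at least one outgoing edge, with hyperlink matrix $A$, let $m\in(0,1)$, and let $x^*$ be the PageRank vector. Let $\{\phi(k)\}_{k\geq 0}$ be a sequence of subsets $\phi(k)\subset\mathcal{V}$ such that every $i\in\mathcal{V}$ belongs to $\phi(k)$ for infinitely many $k$. Consider the algorithm with initial states $x_i(0)=z_i(0)=m/n$ for all $i$, and for $k\geq 0$ and each $i\in\mathcal{V}$, $$x_i(k+1)=x_i(k)+\sum_{j\in\mathcal{L}_i^{\text{in}}\cap\phi(k)}\frac{1-m}{n_j}z_j(k),$$ $$z_i(k+1)=\begin{cases}\displaystyle\sum_{j\in\mathcal{L}_i^{\text{in}}\cap\phi(k)}\frac{1-m}{n_j}z_j(k)&\text{if } i\in\phi(k),\\ \displaystyle z_i(k)+\sum_{j\in\mathcal{L}_i^{\text{in}}\cap\phi(k)}\frac{1-m}{n_j}z_j(k)&\text{otherwise.}\end{cases}$$ Then $x(k)\leq x(k+1)\leq x^*$ for all $k\geq 0$.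
   Context: Write $(i,j)\in\mathcal{E}$ if page $i$ has a link to page $j$. $\mathcal{L}_j^{\text{out}}=\{i:(j,i)\in\mathcal{E}\}$, $\mathcal{L}_i^{\text{in}}=\{j:(j,i)\in\mathcal{E}\}$, and $n_j=|\mathcal{L}_j^{\text{out}}|\geq 1$. The hyperlink matrix $A=(a_{ij})$ is defined by $a_{ij}=1/n_j$ if $i\in\mathcal{L}_j^{\text{out}}$ and $a_{ij}=0$ otherwise (column stochastic). The PageRank vector $x^*$ satisfies $x^*=(1-m)Ax^*+\frac{m}{n}\mathbf{1}_n$ and $\mathbf{1}_n^Tx^*=1$. Here $x(k)=(x_1(k),\ldots,x_n(k))^T$ and inequalities between vectors are entrywise. *)

(* Defs.v *)
From HB Require Import structures.
From mathcomp Require Import all_boot all_order all_algebra.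
Set Implicit Arguments. Unset Strict Implicit. Unset Printing Implicit Defensive.
Import Order.TTheory GRing.Theory Num.Theory.
Local Open Scope ring_scope.

(* A directed graph on 'I_n: E j i means "page j links to page i", i.e. (j,i) in E. *)

Definition outdeg (n : nat) (E : rel 'I_n) (j : 'I_n) : nat :=
  #|[set i | E j i]|.

Definition hyperlink (R : fieldType) (n : nat) (E : rel 'I_n) : 'M[R]_n :=
  \matrix_(i, j) (if E j i then (outdeg E j)%:R^-1 else 0).

Definition is_pagerank (R : fieldType) (n : nat) (E : rel 'I_n) (m : R)
  (xs : 'cV[R]_n) : Prop :=
  xs = (1 - m) *: (hyperlink R E *m xs) + const_mx (m / n%:R)
  /\ \sum_(i < n) xs i ord0 = 1.

Fixpoint pr_state (R : fieldType) (n : nat) (E : rel 'I_n) (m : R)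
  (phi : nat -> {set 'I_n}) (k : nat) : ('I_n -> R) * ('I_n -> R) :=
  match k with
  | 0 => (fun _ => m / n%:R, fun _ => m / n%:R)
  | k'.+1 =>
      let s := pr_state E m phi k' in
      let x := s.1 in let z := s.2 in
      let inc i := \sum_(j < n | E j i && (j \in phi k'))
                      (1 - m) / (outdeg E j)%:R * z j in
      (fun i => x i + inc i,
       fun i => if i \in phi k' then inc i else z i + inc i)
  end.

Definition pr_x (R : fieldType) (n : nat) (E : rel 'I_n) (m : R)
  (phi : nat -> {set 'I_n}) (k : nat) : 'I_n -> R := (pr_state E m phi k).1.
Definition pr_z (R : fieldType) (n : nat) (E : rel 'I_n) (m : R)
  (phi : nat -> {set 'I_n}) (k : nat) : 'I_n -> R := (pr_state E m phi k).2.

(* Main.v *)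
Require Import Defs.
From HB Require Import structures.
From mathcomp Require Import all_boot all_order all_algebra.
From mathcomp Require Import ring lra.
Import Order.TTheory GRing.Theory Num.Theory.
Local Open Scope ring_scope.

Lemma nonneg_fix (R : realFieldType) (n : nat) (b : 'I_n -> 'I_n -> R) (m : R)
  (w z : 'I_n -> R) :
  0 < m ->
  (forall i j, 0 <= b i j) ->
  (forall j, \sum_i b i j = 1 - m) ->
  (forall i, 0 <= z i) ->
  (forall i, w i = \sum_j b i j * (w j + z j)) ->
  forall i, 0 <= w i.
Proof.
move=> m0 b0 bs z0 wE.
pose u i := Num.max (- w i) 0.
have u0 : forall i, 0 <= u i by move=> i; rewrite le_max lexx orbT.
have ule : forall i, u i <= \sum_j b i j * u j.
  move=> i; rewrite ge_max; apply/andP; split; last first.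
    by apply: sumr_ge0 => j _; apply: mulr_ge0.
  rewrite wE -sumrN; apply: ler_sum => j _.
  rewrite -mulrN; apply: ler_wpM2l => //.
  apply: le_trans (_ : - w j <= _); last by rewrite le_max lexx.
  by rewrite opprD lerBlDr lerDl.
have S : \sum_i u i <= (1 - m) * \sum_i u i.
  apply: le_trans (ler_sum _ (fun i _ => ule i)) _.
  rewrite exchange_big /= mulr_sumr; apply: ler_sum => j _.
  by rewrite -mulr_suml bs.
have S0 : \sum_i u i = 0.
  apply/eqP; rewrite eq_le sumr_ge0 // andbT.
  have : m * \sum_i u i <= 0 by move: S; rewrite mulrBl mul1r; lra.
  by rewrite pmulr_rle0.
move=> i.
have := @psumr_eq0P _ _ _ _ (fun i _ => u0 i) S0 i isT.
move=> ui; have : - w i <= u i by rewrite le_max lexx.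
rewrite ui; lra.
Qed.

Theorem lemma3 (R : realFieldType) (n : nat) (E : rel 'I_n) (m : R)
  (xs : 'cV[R]_n) (phi : nat -> {set 'I_n}) :
  (2 <= n)%N ->
  (forall j : 'I_n, (1 <= outdeg E j)%N) ->
  0 < m < 1 ->
  is_pagerank E m xs ->
  (forall (i : 'I_n) (N : nat), exists k, (N <= k)%N /\ i \in phi k) ->
  forall (k : nat) (i : 'I_n),
    pr_x E m phi k i <= pr_x E m phi k.+1 i /\ pr_x E m phi k.+1 i <= xs i ord0.
Proof.
move=> _ hdeg /andP[m0 m1] [xsE _] _.
pose b (i j : 'I_n) : R := if E j i then (1 - m) / (outdeg E j)%:R else 0.
have c0 : forall j : 'I_n, 0 <= (1 - m) / (outdeg E j)%:R.
  by move=> j; apply: divr_ge0; [lra | apply: ler0n].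
have b0 : forall i j, 0 <= b i j by move=> i j; rewrite /b; case: (E j i).
have bs : forall j, \sum_i b i j = 1 - m.
  move=> j; rewrite /b -big_mkcond /=.
  have -> : \sum_(i | E j i) ((1-m)/(outdeg E j)%:R) =
     (1-m)/(outdeg E j)%:R * (\sum_(i | E j i) 1%N)%:R.
    by rewrite natr_sum mulr_sumr; apply: eq_bigr => *; rewrite mulr1.
  have -> : (\sum_(i | E j i) 1)%N = outdeg E j.
    by rewrite /outdeg sum1_card; apply: eq_card => i; rewrite inE.
  rewrite mulr_natr -mulr_natr divfK //.
  by rewrite pnatr_eq0 -lt0n hdeg.
have incE : forall k i, \sum_(j < n | E j i && (j \in phi k))
    (1 - m) / (outdeg E j)%:R * pr_z E m phi k j =
    \sum_j b i j * (if j \in phi k then pr_z E m phi k j else 0).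
  move=> k i; rewrite big_mkcond; apply: eq_bigr => j _.
  by rewrite /b; case: (E j i); case: (j \in phi k); rewrite /= ?mul0r ?mulr0.
have z0 : forall k i, 0 <= pr_z E m phi k i.
  elim=> [|k IH] i.
    by rewrite /pr_z /=; apply: divr_ge0; [lra | apply: ler0n].
  rewrite /pr_z /= -/(pr_z _ _ _ k) incE.
  have s0 : 0 <= \sum_j b i j * (if j \in phi k then pr_z E m phi k j else 0).
    by apply: sumr_ge0 => j _; apply: mulr_ge0 => //; case: ifP.
  by case: ifP => _ //; apply: addr_ge0.
have inv : forall k i, xs i ord0 - pr_x E m phi k i =
    \sum_j b i j * (xs j ord0 - pr_x E m phi k j + pr_z E m phi k j).
  elim=> [|k IH] i.
    rewrite /pr_x /pr_z /=.
    under eq_bigr => j _ do rewrite subrK.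
    rewrite {1}xsE !mxE addrK mulr_sumr; apply: eq_bigr => j _.
    by rewrite !mxE /b; case: (E j i); rewrite ?mul0r ?mulr0 // mulrA.
  rewrite /pr_x /pr_z /= -/(pr_x _ _ _ k) -/(pr_z _ _ _ k) !incE.
  rewrite opprD addrA IH.
  set s := \sum_j _ * (if _ then _ else _).
  rewrite /s -sumrB; apply: eq_bigr => j _.
  rewrite incE; case: ifP => _; ring.
have incge : forall k i, pr_x E m phi k i <= pr_x E m phi k.+1 i.
  move=> k i; rewrite /pr_x /= -/(pr_x _ _ _ k) -/(pr_z _ _ _ k) incE lerDl.
  by apply: sumr_ge0 => j _; apply: mulr_ge0 => //; case: ifP.
move=> k i; split; first exact: incge.
have := @nonneg_fix R n b m (fun i => xs i ord0 - pr_x E m phi k.+1 i)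
  (pr_z E m phi k.+1) m0 b0 bs (z0 k.+1) (inv k.+1) i.
by rewrite subr_ge0.
Qed.
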